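(* Let $(L,\vee,\wedge,f,g,0,1)$ be a BDLGC-algebra. Then there exists a GC-frame $\mathcal{F}=(X,\leq,R)$ such that $(L,\vee,\wedge,f,g,0,1)$ is isomorphic to a subalgebra of the complex algebra $\mathbb{BDL}_{\rm GC}(\mathcal{F})=(\mathcal{T}_\leq,\cup,\cap,{}^\blacktriangle,{}^\blacktriangledown,\emptyset,X)$. If $L$ is finite, then $(L,\vee,\wedge,f,g,0,1)$ is isomorphic to $\mathbb{BDL}_{\rm GC}(\mathcal{F})$.
   Context: A BDLGC-algebra $(L,\vee,\wedge,f,g,0,1)$ is a bounded distributive lattice $(L,\vee,\wedge,0,1)$ with maps $f,g\colon L\to L$ forming an order-preserving Galois connection: $f(a)\leq b\iff a\leq g(b)$ for all $a,b\in L$. A GC-frame $(X,\leq,R)$ is a set $X$ with a quasiorder $\leq$ and a relation $R\subseteq X\times X$ such that $x\leq x'$, $x\,R\,y$, $y'\leq y$ imply $x'\,R\,y'$. $\mathcal{T}_\leq$ is the set of upward $\leq$-closed subsets of $X$. For $A\subseteq X$: $A^\blacktriangle=\{x\mid x\,R\,y\text{ for some }y\in A\}$ and $A^\blacktriangledown=\{x\mid \text{for all }y,\ y\,R\,x\text{ implies }y\in A\}$. The complex algebra $\mathbb{BDL}_{\rm GC}(\mathcal{F})$ is $(\mathcal{T}_\leq,\cup,\cap,{}^\blacktriangle,{}^\blacktriangledown,\emptyset,X)$; isomorphisms preserve $\vee,\wedge,f,g,0,1$ with $f\leftrightarrow{}^\blacktriangle$, $g\leftrightarrow{}^\blacktriangledown$.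 *)

(* Defs.v *)
From mathcomp Require Import all_boot all_order.
Set Implicit Arguments. Unset Strict Implicit. Unset Printing Implicit Defensive.
Import Order.TTheory.
Local Open Scope order_scope.

(* BDLGC-algebra: L is a bounded distributive lattice (tbDistrLatticeType),
   f g : L -> L form an order-preserving Galois connection. *)
Definition galois_connection d (L : tbDistrLatticeType d) (f g : L -> L) : Prop :=
  forall a b : L, (f a <= b) = (a <= g b).

Definition finite_carrier (T : eqType) : Prop := exists s : seq T, forall x, x \in s.

Definition gc_frame (X : Type) (le R : X -> X -> Prop) : Prop :=
  (forall x, le x x) /\
  (forall x y z, le x y -> le y z -> le x z) /\
  (forall x x' y y', le x x' -> R x y -> le y' y -> R x' y').

(* Subsets of X are predicates; T_le = upward le-closed subsets. *)
Definition upset (X : Type) (le : X -> X -> Prop) (A : X -> Prop) : Prop :=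
  forall x x', le x x' -> A x -> A x'.

Definition blacktriangle_up (X : Type) (R : X -> X -> Prop) (A : X -> Prop) : X -> Prop :=
  fun x => exists y, R x y /\ A y.

Definition blacktriangle_down (X : Type) (R : X -> X -> Prop) (A : X -> Prop) : X -> Prop :=
  fun x => forall y, R y x -> A y.

Definition seteq (X : Type) (A B : X -> Prop) : Prop := forall x, A x <-> B x.

(* h : L -> T_le is a BDLGC-homomorphism into the complex algebra
   (T_le, union, intersection, ▲, ▼, empty, X): values are upsets and
   the operations are preserved (f <-> ▲, g <-> ▼). *)
Definition complex_hom d (L : tbDistrLatticeType d) (f g : L -> L)
  (X : Type) (le R : X -> X -> Prop) (h : L -> X -> Prop) : Prop :=
  (forall a, upset le (h a)) /\
  (forall a b, seteq (h (a `|` b)) (fun x => h a x \/ h b x)) /\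
  (forall a b, seteq (h (a `&` b)) (fun x => h a x /\ h b x)) /\
  (forall a, seteq (h (f a)) (blacktriangle_up R (h a))) /\
  (forall a, seteq (h (g a)) (blacktriangle_down R (h a))) /\
  seteq (h \bot) (fun _ => False) /\
  seteq (h \top) (fun _ => True).

(* Embedding = injective homomorphism (iso onto a subalgebra). *)
Definition complex_embedding d (L : tbDistrLatticeType d) (f g : L -> L)
  (X : Type) (le R : X -> X -> Prop) (h : L -> X -> Prop) : Prop :=
  complex_hom f g le R h /\ (forall a b, seteq (h a) (h b) -> a = b).

Definition complex_iso d (L : tbDistrLatticeType d) (f g : L -> L)
  (X : Type) (le R : X -> X -> Prop) (h : L -> X -> Prop) : Prop :=
  complex_embedding f g le R h /\
  (forall U : X -> Prop, upset le U -> exists a, seteq (h a) U).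

(* Main.v *)
Require Import Defs.
From mathcomp Require Import all_boot all_order.
From mathcomp Require Import boolp classical_sets.
From Stdlib Require Classical_Prop.
Set Implicit Arguments. Unset Strict Implicit. Unset Printing Implicit Defensive.
Import Order.TTheory.
Local Open Scope order_scope.

Definition isfilt d (L : tbDistrLatticeType d) (F : L -> Prop) :=
  F \top /\ (forall a b, a <= b -> F a -> F b) /\ (forall a b, F a -> F b -> F (a `&` b)).

Definition pfilt d (L : tbDistrLatticeType d) (P : L -> Prop) :=
  isfilt P /\ ~ P \bot /\ (forall a b, P (a `|` b) -> P a \/ P b).

Lemma pft d (L : tbDistrLatticeType d) (F I : L -> Prop) :
  isfilt F -> (forall a b, a <= b -> I b -> I a) ->
  (forall a b, I a -> I b -> I (a `|` b)) -> I \bot ->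
  (forall x, F x -> I x -> False) ->
  exists P, pfilt P /\ (forall x, F x -> P x) /\ (forall x, P x -> I x -> False).
Proof.
move=> [Ft [Fu Fm]] Id Ij Ib FI.
pose Q (G : L -> Prop) := (forall x, G x -> False) \/
  ((forall x, F x -> G x) /\ (forall a b, a <= b -> G a -> G b) /\
   (forall a b, G a -> G b -> G (a `&` b)) /\ (forall x, G x -> I x -> False)).
have [A [QA Amax]] : exists A, Q A /\ forall B, proper A B -> ~ Q B.
  apply: Zorn_bigcup.
  move=> C CQ Ctot.
  case: (Classical_Prop.classic (exists G, C G /\ exists x, G x)) => [[G0 [CG0 [x0 G0x0]]]|none].
  - right; rewrite /bigcup /=; have QG0 : Q G0 := CQ _ CG0.
    case: QG0 => [/(_ x0 G0x0)//|[G0F _]].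
    split; first by move=> x Fx; exists G0 => //; apply: G0F.
    have ne G x : C G -> G x -> (forall x, F x -> G x) /\ (forall a b, a <= b -> G a -> G b) /\
      (forall a b, G a -> G b -> G (a `&` b)) /\ (forall x, G x -> I x -> False).
      by move=> CG Gx; case: (CQ _ CG) => [/(_ x Gx)//|].
    split; first by move=> a b ab [G CG Ga]; exists G => //; case: (ne _ _ CG Ga) => _ [Gu _]; exact: Gu ab Ga.
    split.
      move=> a b [G CG Ga] [H CH Hb].
      case: (Ctot _ _ CG CH) => sub.
      + by exists H => //; case: (ne _ _ CH Hb) => _ [_ [Hm _]]; apply: Hm => //; apply: sub.
      + by exists G => //; case: (ne _ _ CG Ga) => _ [_ [Gm _]]; apply: Gm => //; apply: sub.
    by move=> x [G CG Gx]; case: (ne _ _ CG Gx) => _ [_ [_ GI]]; apply: GI.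
  - left => x [G CG Gx]; apply: none; by exists G; split => //; exists x.
case: QA => [Aempty|[AF [Au [Am AI]]]].
  exfalso; apply: (Amax F); last first.
    right; split => //; split => //.
  split; first by move=> x /Aempty.
  by move=> sub; apply: (Aempty \top); apply: sub.
exists A; split; last by split.
split; first by split; [apply: AF| split].
split; first by move=> Ab; apply: (AI _ Ab Ib).
move=> a b Aab; apply: Classical_Prop.NNPP => nab.
have ext c : ~ A c -> exists y, A y /\ exists i, I i /\ y `&` c <= i.
  move=> nAc; apply: Classical_Prop.NNPP => H.
  pose B := fun x => exists y, A y /\ y `&` c <= x.
  apply: (Amax B).
    split; first by move=> x Ax; exists x; split => //; exact: leIl.
    move=> BA; apply: nAc; apply: BA; exists \top; split; first by apply: Au (AF _ Ft); exact: lex1.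
    by rewrite meet1x.
  right; split; first by move=> x Fx; exists x; split; [apply: AF | exact: leIl].
  split; first by move=> x y xy [z [Az zx]]; exists z; split => //; exact: le_trans xy.
  split.
    move=> x y [z [Az zx]] [w [Aw wy]]; exists (z `&` w); split; first exact: Am.
    rewrite lexI; apply/andP; split.
      by apply: le_trans zx; rewrite lexI leIr andbT; apply: le_trans (leIl _ _) _; exact: leIl.
    by apply: le_trans wy; rewrite lexI leIr andbT; apply: le_trans (leIl _ _) _; exact: leIr.
  move=> x [z [Az zx]] Ix; apply: H; exists z; split => //; exists x; split => //.
have [y1 [Ay1 [i1 [Ii1 le1]]]] := ext a (fun h => nab (or_introl h)).
have [y2 [Ay2 [i2 [Ii2 le2]]]] := ext b (fun h => nab (or_intror h)).
apply: (AI ((y1 `&` y2) `&` (a `|` b))); first by apply: (Am) => //; apply: (Am).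
apply: (Id _ (i1 `|` i2)); last exact: Ij.
rewrite meetUr leU2 //.
  by apply: le_trans le1; rewrite leI2 // leIl.
by apply: le_trans le2; rewrite leI2 // leIr.
Qed.

Lemma big_join_prime d (L : tbDistrLatticeType d) (P : L -> Prop) (p : pred L) (r : seq L) :
  pfilt P -> P (\join_(c <- r | p c) c) -> exists c, c \in r /\ p c /\ P c.
Proof.
move=> [_ [Pb Pp]]; elim: r => [|c r IH]; first by rewrite big_nil.
rewrite big_cons; case pc: (p c).
  case/Pp => [Pc|/IH [c' [c'r [pc' Pc']]]]; first by exists c; rewrite inE eqxx pc.
  by exists c'; rewrite inE c'r orbT.
by move/IH => [c' [c'r [pc' Pc']]]; exists c'; rewrite inE c'r orbT.
Qed.

Lemma big_join_ge d (L : tbDistrLatticeType d) (p : pred L) (r : seq L) c :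
  c \in r -> p c -> c <= \join_(c <- r | p c) c.
Proof.
elim: r => [//|c' r IH]; rewrite inE big_cons => /orP [/eqP <-|cr] pc.
  by rewrite pc leUl.
case: (p c'); last exact: IH.
by apply: le_trans (IH cr pc) _; rewrite leUr.
Qed.

Lemma big_meet_in d (L : tbDistrLatticeType d) (P : L -> Prop) (r : seq L) :
  isfilt P -> P (\meet_(c <- r | `[< P c >]) c).
Proof.
move=> [Pt [_ Pm]]; elim: r => [|c r IH]; first by rewrite big_nil.
rewrite big_cons; case: asboolP => // Pc; exact: Pm.
Qed.

Lemma big_meet_le d (L : tbDistrLatticeType d) (P : L -> Prop) (r : seq L) b :
  b \in r -> P b -> \meet_(c <- r | `[< P c >]) c <= b.
Proof.
elim: r => [//|c r IH]; rewrite inE big_cons => /orP [/eqP <-|br] Pb.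
  by case: asboolP => // _; rewrite leIl.
case: asboolP => _; last exact: IH.
by apply: le_trans (IH br Pb); rewrite leIr.
Qed.

Record pf d (L : tbDistrLatticeType d) := PF { car : L -> Prop; carP : pfilt car }.

Theorem proposition3p9 (d : Order.disp_t) (L : tbDistrLatticeType d) (f g : L -> L) :
  galois_connection f g ->
  exists (X : Type) (le R : X -> X -> Prop),
    gc_frame le R /\
    (exists h : L -> X -> Prop, complex_embedding f g le R h) /\
    (finite_carrier L -> exists h : L -> X -> Prop, complex_iso f g le R h).
Proof.
move=> gc.
have fmono a b : a <= b -> f a <= f b.
  by move=> ab; rewrite gc; apply: le_trans ab _; rewrite -gc.
have fjoin a b : f (a `|` b) <= f a `|` f b.
  by rewrite gc leUx -!gc leUl leUr.
have fbot : f \bot <= \bot by rewrite gc le0x.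
have fg a : f (g a) <= a by rewrite gc.
pose le (x y : pf L) := forall a, car x a -> car y a.
pose R (x y : pf L) := forall a, car y a -> car x (f a).
pose h (a : L) (x : pf L) := car x a.
have upI (P : L -> Prop) a b : pfilt P -> a <= b -> P a -> P b.
  by move=> [[_ [Pu _]] _]; apply: Pu.
have princ (a : L) : isfilt (fun c : L => a <= c).
  split; first exact: lex1.
  split; first by move=> x y xy ax; exact: le_trans xy.
  by move=> x y ax ay; rewrite lexI ax ay.
have hom : complex_hom f g le R h.
  split; first by move=> a x y; apply.
  split.
    move=> a b [P PP]; rewrite /h /=; split.
      by case: PP => _ [_ Pp]; apply: Pp.
    by case=> H; apply: upI H => //; rewrite ?leUl ?leUr.
  split.
    move=> a b [P PP]; rewrite /h /=; split.
      by move=> H; split; apply: upI H => //; rewrite ?leIl ?leIr.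
    by case: PP => [[_ [_ Pm]] _] [Ha Hb]; apply: Pm.
  split.
    move=> a x; rewrite /h /blacktriangle_up; split; last first.
      by move=> [y [Rxy ya]]; apply: Rxy.
    move=> xfa.
    have [P [PP [aP PI]]] := @pft _ L (fun c => a <= c) (fun c => ~ car x (f c)) (princ a)
      ltac:(move=> u v uv nv xu; apply: nv; apply: upI (fmono _ _ uv) xu; exact: carP)
      ltac:(move=> u v nu nv xuv; case: (carP x) => _ [_ xp];
            by case: (xp _ _ (upI _ _ _ (carP x) (fjoin u v) xuv)))
      ltac:(move=> xb; case: (carP x) => _ [nb _]; apply: nb; exact: upI (carP x) fbot xb)
      ltac:(move=> c ac; apply; apply: upI (fmono _ _ ac) xfa; exact: carP).
    exists (PF PP); split; last by apply: aP.
    move=> c /= Pc; apply: Classical_Prop.NNPP => nc; exact: PI Pc nc.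
  split.
    move=> a x; rewrite /h /blacktriangle_down; split.
      by move=> xga y Ryx; apply: upI (fg a) (Ryx _ xga); exact: carP.
    move=> H; apply: Classical_Prop.NNPP => nxga.
    have Ffilt : isfilt (fun c => exists b, car x b /\ f b <= c).
      case: (carP x) => [[xt [xu xm]] _].
      split; first by exists \top; split => //; exact: lex1.
      split; first by move=> u v uv [b [xb fb]]; exists b; split => //; exact: le_trans uv.
      move=> u v [b [xb fb]] [b' [xb' fb']]; exists (b `&` b'); split; first exact: xm.
      rewrite lexI; apply/andP; split.
        by apply: le_trans fb; apply: fmono; exact: leIl.
      by apply: le_trans fb'; apply: fmono; exact: leIr.
    have i1 : forall a0 b : L, a0 <= b -> b <= a -> a0 <= a by move=> u v uv va; exact: le_trans uv va.
    have i2 : forall a0 b : L, a0 <= a -> b <= a -> a0 `|` b <= a by move=> u v ua va /=; rewrite leUx ua va.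
    have i4 : forall x0 : L, (exists b : L, car x b /\ f b <= x0) -> x0 <= a -> False.
      move=> c [b [xb fbc]] ca; apply: nxga; apply: (upI _ b _ (carP x) _ xb).
      by rewrite -gc; exact: le_trans fbc ca.
    have [P [PP [FP PI]]] := @pft _ L _ (fun c => c <= a) Ffilt i1 i2 (le0x a) i4.
    apply: (PI a) => //; apply: (H (PF PP)) => c xc /=; apply: FP; exists c; split => //.
  split.
    by move=> x; rewrite /h; split => // xb; case: (carP x) => _ [nb _]; apply: nb.
  by move=> x; rewrite /h; split => // _; case: (carP x) => [[xt _] _].
have emb : complex_embedding f g le R h.
  split => // a b eab.
  have onedir u v : (forall x, h u x <-> h v x) -> u <= v.
    move=> euv; apply: Classical_Prop.NNPP => nuv.
    have i1 : forall s t : L, s <= t -> t <= v -> s <= v by move=> s t st tv; exact: le_trans st tv.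
    have i2 : forall s t : L, s <= v -> t <= v -> s `|` t <= v by move=> s t sv tv; rewrite leUx sv tv.
    have i4 : forall c : L, u <= c -> c <= v -> False by move=> c uc cv; apply: nuv; exact: le_trans uc cv.
    have [P [PP [FP PI]]] := @pft _ L (fun c => u <= c) (fun c => c <= v) (princ u) i1 i2 (le0x v) i4.
    apply: (PI v) => //; apply: (euv (PF PP)).1; exact: FP (lexx u).
  apply/eqP; rewrite eq_le (onedir a b) // (onedir b a) //.
  by move=> x; split; move/(eab x).
exists (pf L), le, R; split.
  split; first by move=> x a.
  split; first by move=> x y z xy yz a /xy /yz.
  by move=> x x' y y' xx' Rxy y'y a /y'y /Rxy /xx'.
split; first by exists h.
move=> [s sP]; exists h; split => // U Uup.
pose pb c := `[< exists x : pf L, U x /\ forall b, car x b <-> c <= b >].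
exists (\join_(c <- s | pb c) c) => x; rewrite /h; split.
  move=> /(big_join_prime (carP x)) [c [_ [/asboolP [y [Uy ey]] xc]]].
  apply: Uup Uy => b /ey cb; exact: (upI _ c _ (carP x) cb xc).
move=> Ux.
set m := \meet_(c <- s | `[< car x c >]) c.
have xm : car x m by apply: big_meet_in; case: (carP x).
apply: (upI _ m _ (carP x) _ xm).
apply: big_join_ge => //; apply/asboolP; exists x; split => // b; split.
  by move=> xb; apply: big_meet_le.
by move=> mb; exact: (upI _ m _ (carP x) mb xm).
Qed.
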